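(* For any $L\in\mathbb{N}$ there exists a ReLU network $\phi:\mathbb{R}^2\to\mathbb{R}$, $\phi\in\mathcal{NN}(8,2L)$, such that $\phi(x,l)=x_l$ whenever $x=\sum_{j=1}^Lx_j2^{-j}$ with $x_j\in\{0,1\}$ and $l\in\{1,2,\dots,L\}$. Furthermore, $|\phi(x,l)-\phi(x',l')|\le2\cdot2^{L^2}|x-x'|+L|l-l'|$ for all $x,x',l,l'\in\mathbb{R}$.
   Context: $\sigma(x)=\max(x,0)$. $\mathcal{NN}(W,L)$: functions $\phi(x)=T_L(\sigma(T_{L-1}(\cdots\sigma(T_0(x))\cdots)))$ with affine maps $T_l$, ReLU componentwise, all hidden layer sizes $\le W$ and depth $\le L$. *)

(* Defs.v *)
From mathcomp Require Import all_boot all_order all_algebra.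
From mathcomp Require Import reals.
Set Implicit Arguments. Unset Strict Implicit. Unset Printing Implicit Defensive.
Import Order.TTheory GRing.Theory Num.Theory.
Local Open Scope ring_scope.

Definition relu {R : realType} (x : R) : R := Num.max x 0.
Definition relu_vec {R : realType} {n : nat} (v : 'rV[R]_n) : 'rV[R]_n :=
  map_mx relu v.

(* hidden R d W k n g : g : R^d -> R^n is the output of the k-th hidden layer
   of a ReLU network with input dimension d, i.e.
   g = sigma o T_{k-1} o sigma o ... o sigma o T_0, where every hidden layer
   size is <= W. *)
Local Unset Implicit Arguments.
Inductive hidden {R : realType} (d W : nat) :
  forall (k n : nat), ('rV[R]_d -> 'rV[R]_n) -> Prop :=
| hidden0 : hidden d W 0%N d id
| hiddenS : forall (k m n : nat) (g : 'rV[R]_d -> 'rV[R]_m)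
              (A : 'M[R]_(m, n)) (b : 'rV[R]_n),
    hidden d W k m g -> (n <= W)%N ->
    hidden d W k.+1 n (fun x => relu_vec (g x *m A + b)).

Definition NN {R : realType} (d W L : nat) (phi : 'rV[R]_d -> R) : Prop :=
  exists (K m : nat) (g : 'rV[R]_d -> 'rV[R]_m) (A : 'cV[R]_m) (b : R),
    (K <= L)%N /\ hidden d W K m g /\ forall x, phi x = (g x *m A) 0 0 + b.

Local Set Implicit Arguments.
Definition vec2 {R : realType} (x y : R) : 'rV[R]_2 :=
  \row_(i < 2) (if i == ord0 then x else y).

(* Main.v *)
Require Import Defs.
From mathcomp Require Import all_boot all_order all_algebra.
From mathcomp Require Import reals.
From mathcomp Require Import lra ring zify.
From Stdlib Require Import FunctionalExtensionality.
Import Order.TTheory GRing.Theory Num.Theory.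
Local Open Scope ring_scope.


Lemma reluP {R : realType} {x : R} : 0 <= x -> relu x = x.
Proof. rewrite /relu => h; case: lerP => //; lra. Qed.
Lemma reluN {R : realType} {x : R} : x <= 0 -> relu x = 0.
Proof. rewrite /relu => h; case: lerP => //; lra. Qed.
Ltac elim_relu := repeat match goal with |- context [@relu _ ?u] => lazymatch u with context [relu _] => fail | _ => let h := fresh "h" in have [h|h] := lerP 0 u; [rewrite (reluP h) | rewrite (reluN (ltW h))] end end.
Ltac elim_norm := repeat match goal with |- context [ @Num.norm _ _ ?u ] => let h := fresh "h" in have [h|h] := lerP 0 u; [rewrite (ger0_norm h) | rewrite (ltr0_norm h)] end.

Lemma relu_ge0 {R : realType} (x : R) : 0 <= relu x.
Proof. elim_relu; lra. Qed.
Lemma relu_sub {R : realType} (x : R) : relu x - relu (- x) = x.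
Proof. elim_relu; lra. Qed.
Lemma relu_relu {R : realType} (x : R) : relu (relu x) = relu x.
Proof. by rewrite (reluP (relu_ge0 x)). Qed.

Definition ramp {R : realType} (t : R) := relu (t + 1) - relu t.
Fixpoint yy {R : realType} (c : R) (k : nat) (x : R) : R :=
  match k with 0%N => x | k'.+1 => 2 * yy c k' x - ramp (c * (yy c k' x - 2^-1)) end.
Definition bit {R : realType} (c : R) k x := ramp (c * (yy c k x - 2^-1)).
Definition tt {R : realType} (c : R) k x l :=
  relu (bit c k x - relu (l - k.+1%:R) - relu (k.+1%:R - l)).
Fixpoint ss {R : realType} (c : R) k x l : R :=
  match k with 0%N => 0 | k'.+1 => ss c k' x l + tt c k' x l end.

Lemma tt_ge0 {R : realType} (c : R) k x l : 0 <= tt c k x l.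
Proof. exact: relu_ge0. Qed.
Lemma ss_ge0 {R : realType} (c : R) k x l : 0 <= ss c k x l.
Proof. elim: k => [|k IH] /=; first by []. have := tt_ge0 c k x l; lra. Qed.

Definition xv {R : realType} (v : 'rV[R]_2) := v ord0 ord0.
Definition lv {R : realType} (v : 'rV[R]_2) := v ord0 (lift ord0 ord0).

Definition stN {R : realType} (c : R) k x l (i : nat) : R :=
  match i with
  | 0%N => relu (yy c k.+1 x) | 1%N => relu (- yy c k.+1 x)
  | 2%N => relu (l - k.+1%:R) | 3%N => relu (k.+1%:R - l)
  | 4%N => ss c k x l | _ => tt c k x l end.
Definition midN {R : realType} (c : R) k x l (i : nat) : R :=
  match i with
  | 0%N => relu (c * (yy c k x - 2^-1) + 1) | 1%N => relu (c * (yy c k x - 2^-1))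
  | 2%N => relu (yy c k x) | 3%N => relu (- yy c k x)
  | 4%N => relu (l - k.+1%:R) | 5%N => relu (k.+1%:R - l)
  | _ => ss c k x l end.

Definition cin {R : realType} (c : R) (i j : nat) : R :=
  match i, j with
  | 0%N, 0%N => c | 0%N, 1%N => c | 0%N, 2%N => 1 | 0%N, 3%N => -1 | 1%N, 4%N => 1 | 1%N, 5%N => -1
  | _, _ => 0 end.
Definition cb {R : realType} (c : R) (j : nat) : R :=
  match j with 0%N => 1 - c / 2 | 1%N => - (c / 2) | 4%N => -1 | 5%N => 1 | _ => 0 end.
Definition cms {R : realType} (i j : nat) : R :=
  match i, j with
  | 0%N, 0%N => -1 | 1%N, 0%N => 1 | 2%N, 0%N => 2 | 3%N, 0%N => -2
  | 0%N, 1%N => 1 | 1%N, 1%N => -1 | 2%N, 1%N => -2 | 3%N, 1%N => 2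
  | 4%N, 2%N => 1 | 5%N, 3%N => 1 | 6%N, 4%N => 1
  | 0%N, 5%N => 1 | 1%N, 5%N => -1 | 4%N, 5%N => -1 | 5%N, 5%N => -1
  | _, _ => 0 end.
Definition csm {R : realType} (c : R) (i j : nat) : R :=
  match i, j with
  | 0%N, 0%N => c | 1%N, 0%N => - c | 0%N, 1%N => c | 1%N, 1%N => - c
  | 0%N, 2%N => 1 | 1%N, 2%N => -1 | 0%N, 3%N => -1 | 1%N, 3%N => 1
  | 2%N, 4%N => 1 | 3%N, 4%N => -1 | 2%N, 5%N => -1 | 3%N, 5%N => 1
  | 4%N, 6%N => 1 | 5%N, 6%N => 1
  | _, _ => 0 end.

Lemma layer {R : realType} (W k m n : nat) (g : 'rV[R]_2 -> 'rV[R]_m)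
  (F G : 'rV[R]_2 -> nat -> R) (cf : nat -> nat -> R) (cc : nat -> R) :
  hidden 2 W k m g -> (forall v, g v = \row_(i < m) F v i) -> (n <= W)%N ->
  (forall v (j : 'I_n), G v j = relu (\sum_(i < m) F v i * cf i j + cc j)) ->
  hidden 2 W k.+1 n (fun v => \row_(j < n) G v j).
Proof.
move=> hg gE hn GE.
have -> : (fun v => \row_(j < n) G v j) =
  (fun v => relu_vec (g v *m (\matrix_(i < m, j < n) cf i j) + \row_(j < n) cc j)).
  apply: functional_extensionality => v; apply/rowP => j.
  rewrite /relu_vec !mxE GE; congr (relu (_ + _)).
  by apply: eq_bigr => i _; rewrite gE !mxE.
by constructor.
Qed.

Ltac expand_sum := rewrite !big_ord_recl big_ord0 /bump /= ?add1n.

Lemma relu_sub2 {R : realType} (x y : R) : relu (x - y) - relu (y - x) = x - y.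
Proof. elim_relu; lra. Qed.
Lemma aux_c1 {R : realType} (y a b c : R) : a - b = y ->
  c * (y - 2^-1) + 1 = a * c + b * - c + (1 - c / 2).
Proof. by move=> <-; field. Qed.
Lemma aux_c2 {R : realType} (y a b c : R) : a - b = y ->
  c * (y - 2^-1) = a * c + b * - c - c / 2.
Proof. by move=> <-; field. Qed.

Lemma st_layer {R : realType} (c : R) k d g :
  hidden 2 8 d 7 g -> (forall v, g v = \row_(i < 7) midN c k (xv v) (lv v) i) ->
  hidden 2 8 d.+1 6 (fun v => \row_(j < 6) stN c k (xv v) (lv v) j).
Proof.
move=> hg gE.
apply: (@layer R 8 d 7 6 g (fun v => midN c k (xv v) (lv v)) (fun v => stN c k (xv v) (lv v)) cms (fun _ => 0) hg gE) => //.
move=> v j; expand_sum.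
case: j => [[|[|[|[|[|[|j]]]]]] hj] //=.
all: rewrite /= ?mulr0 ?mulr1 ?addr0 ?add0r ?relu_relu //.
- congr relu; have := relu_sub (yy c k (xv v)); rewrite /ramp; lra.
- congr relu; have := relu_sub (yy c k (xv v)); rewrite /ramp; lra.
- by rewrite reluP // ss_ge0.
- rewrite /tt /bit /ramp; congr relu; lra.
Qed.

Lemma mid_layer {R : realType} (c : R) k d g :
  hidden 2 8 d 6 g -> (forall v, g v = \row_(i < 6) stN c k (xv v) (lv v) i) ->
  hidden 2 8 d.+1 7 (fun v => \row_(j < 7) midN c k.+1 (xv v) (lv v) j).
Proof.
move=> hg gE.
apply: (@layer R 8 d 6 7 g (fun v => stN c k (xv v) (lv v)) (fun v => midN c k.+1 (xv v) (lv v)) (csm c) (cb c) hg gE) => //.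
move=> v j; expand_sum.
have E := relu_sub (yy c k.+1 (xv v)); simpl in E.
have E2 := relu_sub2 (lv v) k.+1%:R.
have H2 : (k.+2%:R : R) = k.+1%:R + 1 by rewrite -addn1 natrD.
case: j => [[|[|[|[|[|[|[|j]]]]]]] hj] //=.
all: rewrite /= ?mulr0 ?mulr1 ?addr0 ?add0r ?relu_relu //.
- by congr relu; apply: aux_c1.
- by congr relu; apply: aux_c2.
- congr relu; lra.
- congr relu; lra.
- rewrite H2; congr relu; lra.
- rewrite H2; congr relu; lra.
- by rewrite reluP // addr_ge0 ?ss_ge0 ?tt_ge0.
Qed.

Lemma mid0 {R : realType} (c : R) :
  hidden 2 8 1 7 (fun v => \row_(j < 7) midN c 0 (xv v) (lv v) j).
Proof.
apply: (@layer R 8 0 2 7 id (fun v i => if i is 0%N then xv v else lv v) (fun v => midN c 0 (xv v) (lv v)) (cin c) (cb c) (hidden0 _ _)) => //.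
  move=> v; apply/rowP => i; rewrite !mxE.
  case: i => [[|[|i]] hi] //=; rewrite /xv /lv; congr (v _ _); exact: val_inj.
move=> v j; expand_sum.
case: j => [[|[|[|[|[|[|[|j]]]]]]] hj] //=.
all: try by (congr relu; rewrite ?mulr0 ?mulr1 ?addr0; field).
by rewrite !mulr0 !addr0 reluN.
Qed.


Lemma chain {R : realType} (c : R) k : exists g : 'rV[R]_2 -> 'rV[R]_6,
  hidden 2 8 k.*2.+2 6 g /\ forall v, g v = \row_(i < 6) stN c k (xv v) (lv v) i.
Proof.
elim: k => [|k [g [hg gE]]].
  eexists; split; [|by []].
  by apply: st_layer; [exact: mid0|].
eexists; split; [|by []].
rewrite doubleS; apply: st_layer => //.
exact: mid_layer hg gE.
Qed.


Lemma ramp_mono {R : realType} (t t' : R) : t <= t' -> 0 <= ramp t' - ramp t <= t' - t.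
Proof. rewrite /ramp => h; apply/andP; split; elim_relu; lra. Qed.

Lemma ramp_lip {R : realType} (t t' : R) : `|ramp t - ramp t'| <= `|t - t'|.
Proof. rewrite /ramp; elim_relu; elim_norm; lra. Qed.

Lemma relu_lip {R : realType} (t t' : R) : `|relu t - relu t'| <= `|t - t'|.
Proof. elim_relu; elim_norm; lra. Qed.

Lemma rho_lip {R : realType} (a l l' : R) :
  `|(relu (l - a) + relu (a - l)) - (relu (l' - a) + relu (a - l'))| <= `|l - l'|.
Proof. elim_relu; elim_norm; lra. Qed.

Lemma step_lip {R : realType} (c z z' : R) : 2 <= c ->
  `|(2 * z - ramp (c * (z - 2^-1))) - (2 * z' - ramp (c * (z' - 2^-1)))| <= c * `|z - z'|.
Proof.
move=> hc.
have [h|h] := lerP z z'.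
  have H0 : c * (z - 2^-1) <= c * (z' - 2^-1) by nra.
  move: (ramp_mono _ _ H0) => /andP [H1 H2].
  have hz : 0 <= (c - 2) * (z' - z) by apply: mulr_ge0; lra.
  elim_norm; nra.
have H0 : c * (z' - 2^-1) <= c * (z - 2^-1) by nra.
move: (ramp_mono _ _ H0) => /andP [H1 H2].
have hz : 0 <= (c - 2) * (z - z') by apply: mulr_ge0; lra.
elim_norm; nra.
Qed.

Lemma yy_lip {R : realType} (c : R) k x x' : 2 <= c ->
  `|yy c k x - yy c k x'| <= c ^+ k * `|x - x'|.
Proof.
move=> hc; elim: k => [|k IH] /=; first by rewrite expr0 mul1r.
apply: le_trans (step_lip _ _ _ hc) _.
rewrite exprS -mulrA; apply: ler_wpM2l => //; lra.
Qed.

Lemma bit_lip {R : realType} (c : R) k x x' : 2 <= c ->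
  `|bit c k x - bit c k x'| <= c ^+ k.+1 * `|x - x'|.
Proof.
move=> hc; rewrite /bit; apply: le_trans (ramp_lip _ _) _.
have -> : c * (yy c k x - 2^-1) - c * (yy c k x' - 2^-1) = c * (yy c k x - yy c k x') by ring.
rewrite normrM exprS -mulrA (ger0_norm (_ : 0 <= c)); last lra.
apply: ler_wpM2l; [lra | exact: yy_lip].
Qed.

Lemma tt_lip {R : realType} (c : R) k x x' l l' : 2 <= c ->
  `|tt c k x l - tt c k x' l'| <= c ^+ k.+1 * `|x - x'| + `|l - l'|.
Proof.
move=> hc; rewrite /tt; apply: le_trans (relu_lip _ _) _.
set a := bit c k x; set a' := bit c k x'.
pose r := relu (l - k.+1%:R) + relu (k.+1%:R - l); pose r' := relu (l' - k.+1%:R) + relu (k.+1%:R - l').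
have -> : a - relu (l - k.+1%:R) - relu (k.+1%:R - l) - (a' - relu (l' - k.+1%:R) - relu (k.+1%:R - l'))
  = (a - a') - (r - r') by rewrite /r /r'; ring.
apply: le_trans (ler_normB _ _) _.
apply: lerD; [exact: bit_lip | exact: rho_lip].
Qed.

Lemma ss_lip {R : realType} (c : R) k x x' l l' : 2 <= c ->
  `|ss c k x l - ss c k x' l'| <= (\sum_(i < k) c ^+ i.+1) * `|x - x'| + k%:R * `|l - l'|.
Proof.
move=> hc; elim: k => [|k IH] /=.
  by rewrite big_ord0 subrr normr0 mul0r mul0r addr0.
have -> : ss c k x l + tt c k x l - (ss c k x' l' + tt c k x' l')
  = (ss c k x l - ss c k x' l') + (tt c k x l - tt c k x' l') by ring.
apply: le_trans (ler_normD _ _) _.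
rewrite big_ord_recr /= -natr1 mulrDl mulrDl mul1r.
have := tt_lip c k x x' l l' hc; lra.
Qed.

Lemma geom {R : realType} (c : R) k : 2 <= c -> \sum_(i < k) c ^+ i.+1 <= 2 * c ^+ k.
Proof.
move=> hc; elim: k => [|k IH]; first by rewrite big_ord0 expr0 mulr1.
rewrite big_ord_recr /= exprS.
have : 0 <= c ^+ k by apply: exprn_ge0; lra.
nra.
Qed.


Definition TT {R : realType} (L : nat) (xs : nat -> bool) (k : nat) : R :=
  \sum_(k.+1 <= j < L.+1) (xs j)%:R / 2 ^+ (j - k).

Lemma TT_L {R : realType} L xs : TT L xs L = 0 :> R.
Proof. by rewrite /TT big_geq. Qed.

Lemma TT_split {R : realType} L xs k : (k < L)%N ->
  TT L xs k = (xs k.+1)%:R / 2 + TT L xs k.+1 / 2 :> R.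
Proof.
move=> hk; rewrite /TT big_ltn ?ltnS // subSnn expr1; congr (_ + _).
rewrite mulr_suml; apply: eq_big_nat => j /andP [hj _].
have -> : (j - k = (j - k.+1).+1)%N by lia.
rewrite exprS invfM. ring.
Qed.

Lemma xs_01 {R : realType} (b : bool) : 0 <= b%:R :> R /\ b%:R <= 1 :> R.
Proof. by case: b => /=; rewrite ?ler01 ?lexx. Qed.

Lemma TT_ge0 {R : realType} L xs k : 0 <= TT L xs k :> R.
Proof.
apply: sumr_ge0 => j _; apply: divr_ge0; first by case: (xs j) => /=; rewrite ?ler01 ?lexx.
apply: exprn_ge0; lra.
Qed.

Lemma TT_bound {R : realType} L xs d : forall k, (k + d = L)%N ->
  TT L xs k * 2 ^+ d + 1 <= 2 ^+ d :> R.
Proof.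
elim: d => [|d IH] k hk.
  by rewrite addn0 in hk; rewrite hk TT_L expr0 mul0r add0r.
rewrite TT_split; last by lia.
have := IH k.+1 ltac:(lia).
have [h0 h1] := xs_01 (R:=R) (xs k.+1).
have hp : 0 <= 2 ^+ d :> R by apply: exprn_ge0; lra.
rewrite exprS; move: h0 h1 hp.
set p := 2 ^+ d; set t := TT L xs k.+1; set b := (xs k.+1)%:R.
have -> : (b / 2 + t / 2) * (2 * p) + 1 = b * p + t * p + 1 by field.
move=> h0 h1 hp; nra.
Qed.

Lemma bit_of_T {R : realType} L xs k : (k < L)%N ->
  ramp (2 ^+ L * (TT L xs k - 2^-1)) = (xs k.+1)%:R :> R.
Proof.
move=> hk; rewrite TT_split //.
have tge := TT_ge0 (R:=R) L xs k.+1.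
have cge : 0 <= 2 ^+ L :> R by apply: exprn_ge0; lra.
rewrite /ramp; case: (xs k.+1) => /=.
  have h : 0 <= 2 ^+ L * (1 / 2 + TT L xs k.+1 / 2 - 2^-1) :> R.
    apply: mulr_ge0 => //; lra.
  rewrite !reluP //; lra.
have B := @TT_bound R L xs (L - k.+1)%N k.+1 ltac:(lia).
have hc : (2:R) ^+ L = 2 ^+ (L - k.+1) * (2 ^+ k * 2).
  by rewrite -exprSr -exprD; congr (_ ^+ _); lia.
have hq : 1 <= 2 ^+ k :> R by apply: exprn_ege1; lra.
have hp : 0 <= 2 ^+ (L - k.+1) :> R by apply: exprn_ge0; lra.
move: B hq hp; rewrite hc.
set p := 2 ^+ (L - k.+1); set q := 2 ^+ k; set t := TT L xs k.+1 => B hq hp.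
have h2 : 0 <= q * (p - t * p - 1) by apply: mulr_ge0; lra.
have h : p * (q * 2) * (0 / 2 + t / 2 - 2^-1) <= -1.
  have -> : p * (q * 2) * (0 / 2 + t / 2 - 2^-1) = q * (t * p - p) by field.
  nra.
rewrite !reluN //; lra.
Qed.

Lemma yyS {R : realType} (c : R) k x :
  yy c k.+1 x = 2 * yy c k x - ramp (c * (yy c k x - 2^-1)).
Proof. reflexivity. Qed.

Lemma yy0 {R : realType} (c : R) x : yy c 0 x = x.
Proof. by []. Qed.

Lemma yy_TT {R : realType} L xs k : (k <= L)%N ->
  yy (2 ^+ L) k (TT L xs 0) = TT L xs k :> R.
Proof.
elim: k => [|k IH] hk.
  rewrite yy0.
  reflexivity.
rewrite yyS.
have hk' : (k <= L)%N by exact: ltnW.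
rewrite (IH hk').
rewrite (@bit_of_T R L xs k hk).
rewrite (@TT_split R L xs k hk).
by field.
Qed.

Lemma bit_TT {R : realType} L xs k : (k < L)%N ->
  bit (2 ^+ L) k (TT L xs 0) = (xs k.+1)%:R :> R.
Proof. move=> hk; rewrite /bit (@yy_TT R L xs k (ltnW hk)); exact: bit_of_T. Qed.

Lemma tt_TT {R : realType} L xs k l : (k < L)%N ->
  tt (2 ^+ L) k (TT L xs 0) l%:R = (if l == k.+1 then (xs l)%:R else 0) :> R.
Proof.
move=> hk; rewrite /tt (@bit_TT R L xs k hk).
have [b0 b1] := xs_01 (R:=R) (xs k.+1).
case: eqP => [->|hne].
  by rewrite subrr (reluN (lexx (0:R))) !subr0 reluP.
have [hl|hl] : (l.+1 <= k.+1)%N \/ (k.+2 <= l)%N by lia.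
  have : l%:R + 1 <= k.+1%:R :> R by rewrite natr1 ler_nat.
  move=> H; elim_relu; lra.
have : k.+1%:R + 1 <= l%:R :> R by rewrite natr1 ler_nat.
move=> H; elim_relu; lra.
Qed.

Lemma ss0 {R : realType} (c : R) x l : ss c 0 x l = 0.
Proof. reflexivity. Qed.
Lemma ssS {R : realType} (c : R) k x l : ss c k.+1 x l = ss c k x l + tt c k x l.
Proof. reflexivity. Qed.

Lemma ss_TT {R : realType} L xs k l : (k <= L)%N -> (1 <= l)%N ->
  ss (2 ^+ L) k (TT L xs 0) l%:R = (if (l <= k)%N then (xs l)%:R else 0) :> R.
Proof.
move=> + hl; elim: k => [|k IH] hk.
  by rewrite ss0 leqNgt hl.
rewrite ssS (IH (ltnW hk)) (@tt_TT R L xs k l hk).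
have [h|h|h] := ltngtP l k.+1.
- by rewrite (_ : (l <= k)%N = true) ?addr0 //; lia.
- by rewrite (_ : (l <= k)%N = false) ?addr0 //; lia.
- by rewrite h ltnn add0r.
Qed.


Lemma nn_part {R : realType} (c : R) L :
  NN 2 8 (2 * L) (fun v : 'rV[R]_2 => ss c L (xv v) (lv v)).
Proof.
case: L => [|k].
  exists 0%N, 2%N, id, 0, 0; split => //; split; first exact: hidden0.
  by move=> v; rewrite mulmx0 mxE addr0.
have [g [hg gE]] := chain c k.
exists k.*2.+2, 6%N, g, (\col_(i < 6) if (4 <= i)%N then 1 else 0), 0.
split; first by lia.
split => // v; rewrite gE mxE; expand_sum; rewrite !mxE /=.
lra.
Qed.


Lemma lip_part {R : realType} L (x x' l l' : R) :
  `|ss (2 ^+ L) L x l - ss (2 ^+ L) L x' l'|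
    <= 2 * 2 ^+ (L ^ 2) * `|x - x'| + L%:R * `|l - l'|.
Proof.
case: L => [|k].
  rewrite !ss0 subrr normr0 mul0r addr0.
  by apply: mulr_ge0; [apply: mulr_ge0; [lra | apply: exprn_ge0; lra] | exact: normr_ge0].
have hc : 2 <= (2 : R) ^+ k.+1.
  have : 1 <= (2 : R) ^+ k by apply: exprn_ege1; lra.
  rewrite exprS; lra.
apply: le_trans (ss_lip _ _ _ _ _ _ hc) _.
apply: lerD => //.
apply: ler_wpM2r; first exact: normr_ge0.
apply: le_trans (geom _ _ hc) _.
by rewrite -exprM mulnn.
Qed.

Theorem lemma29 (R : realType) (L : nat) :
  exists phi : 'rV[R]_2 -> R,
    NN 2 8 (2 * L) phi /\
    (forall (xs : nat -> bool) (l : nat), (1 <= l <= L)%N ->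
       phi (vec2 (\sum_(1 <= j < L.+1) (xs j)%:R / 2 ^+ j) l%:R) = (xs l)%:R) /\
    (forall x x' l l' : R,
       `|phi (vec2 x l) - phi (vec2 x' l')|
         <= 2 * 2 ^+ (L ^ 2) * `|x - x'| + L%:R * `|l - l'|).
Proof.
have xvE : forall x l : R, xv (vec2 x l) = x by move=> x l; rewrite /xv /vec2 mxE.
have lvE : forall x l : R, lv (vec2 x l) = l by move=> x l; rewrite /lv /vec2 mxE.
exists (fun v => ss (2 ^+ L) L (xv v) (lv v)).
split; first exact: nn_part.
split.
  move=> xs l /andP [h1 h2]; rewrite xvE lvE.
  have -> : \sum_(1 <= j < L.+1) (xs j)%:R / 2 ^+ j = TT L xs 0 :> R.
    by rewrite /TT; apply: eq_bigr => j _; rewrite subn0.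
  by rewrite (@ss_TT R L xs L l (leqnn L) h1) h2.
by move=> x x' l l'; rewrite !xvE !lvE; apply: lip_part.
Qed.
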